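(* For all $a,b>0$ and $0\le v\le 1$, $$L(a,b)\le \frac{1}{2}A_v(a,b)+\frac{1}{2}G_{1-v}(a,b).$$
   Context: For $a,b>0$ and $0\le v\le 1$: $A_v(a,b):=(1-v)a+vb$, $G_v(a,b):=a^{1-v}b^v$ (so $G_{1-v}(a,b)=a^vb^{1-v}$). The logarithmic mean is $L(a,b):=\frac{a-b}{\log a-\log b}$ for $a\ne b$ and $L(a,a):=a$. *)

(* Defs.v *)
From Stdlib Require Import Reals.
Open Scope R_scope.

Definition A_v (v a b : R) : R := (1 - v) * a + v * b.

Definition G_v (v a b : R) : R := Rpower a (1 - v) * Rpower b v.

Definition Lmean (a b : R) : R :=
  if Req_EM_T a b then a else (a - b) / (ln a - ln b).

(* Main.v *)
Require Import Defs.
From Stdlib Require Import Reals Lra Psatz.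
From Coquelicot Require Import Coquelicot.
Open Scope R_scope.

Definition gfun (x : R) : R := x * (exp x + 1) - 2 * (exp x - 1).

Lemma gder_nonneg (x : R) : 0 <= 1 - exp x + x * exp x.
Proof.
  pose proof (exp_ineq1_le (- x)) as H.
  assert (E : exp (- x) * exp x = 1) by (rewrite <- exp_plus; replace (-x + x) with 0 by ring; apply exp_0).
  pose proof (exp_pos x).
  nra.
Qed.

Lemma g_sign (x : R) : 0 <= x * gfun x.
Proof.
  destruct (MVT_gen gfun 0 x (fun y => 1 - exp y + y * exp y)) as [c [_ Hc]].
  - intros y _. unfold gfun. auto_derive; [exact I|ring].
  - intros y _. apply continuity_pt_filterlim. apply (ex_derive_continuous (K:=R_AbsRing) (V:=R_NormedModule)).
    unfold gfun. auto_derive. exact I.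
  - assert (g0 : gfun 0 = 0) by (unfold gfun; rewrite exp_0; ring).
    rewrite g0 in Hc. pose proof (gder_nonneg c). nra.
Qed.

Lemma g_scaled (c t : R) : 0 <= t -> 0 <= c * gfun (t * c).
Proof.
  intros Ht. destruct (Req_dec t 0) as [->|Hn].
  - replace (0 * c) with 0 by ring. unfold gfun. rewrite exp_0. nra.
  - pose proof (g_sign (t * c)). assert (0 < t) by lra.
    apply Rmult_le_reg_l with t; [lra|]. nra.
Qed.

Theorem theorem2p5 (a b v : R) (ha : 0 < a) (hb : 0 < b)
  (hv0 : 0 <= v) (hv1 : v <= 1) :
  Lmean a b <= / 2 * A_v v a b + / 2 * G_v (1 - v) a b.
Proof.
  unfold Lmean, A_v, G_v, Rpower.
  replace (1 - (1 - v)) with v by ring.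
  set (la := ln a). set (lb := ln b).
  assert (Ea : a = exp la) by (unfold la; rewrite exp_ln; auto).
  assert (Eb : b = exp lb) by (unfold lb; rewrite exp_ln; auto).
  destruct (Req_EM_T a b) as [<-|Hne].
  - unfold la, lb. rewrite <- exp_plus. replace (v * ln a + (1 - v) * ln a) with (ln a) by ring.
    rewrite exp_ln; lra.
  - set (c := la - lb).
    assert (Hc : c <> 0).
    { intro H0. apply Hne. rewrite Ea, Eb. f_equal. unfold c in H0. lra. }
    set (E1 := exp (v * c)). set (E2 := exp ((1 - v) * c)).
    assert (HA : a = b * E1 * E2).
    { rewrite Ea, Eb. unfold E1, E2. rewrite <- !exp_plus. f_equal. unfold c. ring. }
    assert (HG : exp (v * la) * exp ((1 - v) * lb) = b * E1).
    { rewrite Eb. unfold E1. rewrite <- !exp_plus. f_equal. unfold c. ring. }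
    rewrite HG. fold c.
    pose proof (g_scaled c v hv0) as F1.
    pose proof (g_scaled c (1 - v) ltac:(lra)) as F2.
    unfold gfun in F1, F2. fold E1 in F1. fold E2 in F2.
    assert (PE1 : 0 < E1) by apply exp_pos.
    assert (K1 : 0 <= b * (c * (v * c * (E1 + 1) - 2 * (E1 - 1)))) by (apply Rmult_le_pos; lra).
    assert (K2 : 0 <= (b * E1) * (c * ((1 - v) * c * (E2 + 1) - 2 * (E2 - 1)))) by (apply Rmult_le_pos; nra).
    assert (Hc2 : 0 < c * c) by (destruct (Rdichotomy _ _ Hc); nra).
    apply Rmult_le_reg_l with (c * c); [exact Hc2|].
    replace (c * c * ((a - b) / c)) with (c * (a - b)) by (field; exact Hc).
    rewrite HA. nra.
Qed.
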